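(* Let $d\ge1$, let $P$ be a probability distribution on $\{0,1\}^d$ with $P(\nu)>0$ for all $\nu$, and fix $\omega\in\{0,1\}^d$. Let $A_\omega$ be the $(2^d-1)\times d$ binary matrix with rows indexed by $\nu\in\{0,1\}^d\setminus\{\omega\}$ and entries $A_\omega(\nu,i)=1$ if $\nu_i\ne\omega_i$ and $0$ otherwise, and let $b_\omega(\nu)=\ln(P(\nu)/P(\omega))$. Then the polyhedron $\{y\in\mathbb{R}^d\mid A_\omega y\le b_\omega\}$ is pointed, i.e. it contains at least one vertex.
   Context: A point $y$ of the polyhedron $\{y: A_\omega y\le b_\omega\}$ is a vertex if there is an invertible $d\times d$ submatrix $A'_\omega$ of $A_\omega$, formed by some $d$ rows, with corresponding subvector $b'_\omega$ of $b_\omega$ (same rows), such that $A'_\omega y=b'_\omega$. *)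

(* Defs.v *)
From HB Require Import structures.
From mathcomp Require Import all_boot all_order all_algebra.
From mathcomp Require Import reals exp.
Set Implicit Arguments. Unset Strict Implicit. Unset Printing Implicit Defensive.
Import Order.TTheory GRing.Theory Num.Theory.
Local Open Scope ring_scope.

Definition cube (d : nat) := {ffun 'I_d -> bool}.

Section Defs.
Variables (R : realType) (d : nat).

Definition Aom (w nu : cube d) (i : 'I_d) : R := if nu i != w i then 1 else 0.

Definition bom (P : cube d -> R) (w nu : cube d) : R := ln (P nu / P w).

Definition in_polyhedron (P : cube d -> R) (w : cube d) (y : 'cV[R]_d) : Prop :=
  forall nu : cube d, nu != w -> \sum_(i < d) Aom w nu i * y i 0 <= bom P w nu.

Definition is_vertex (P : cube d -> R) (w : cube d) (y : 'cV[R]_d) : Prop :=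
  in_polyhedron P w y /\
  exists s : 'I_d -> cube d,
    [/\ injective s, (forall k, s k != w),
        (\matrix_(k < d, i < d) Aom w (s k) i) \in unitmx &
        (\matrix_(k < d, i < d) Aom w (s k) i) *m y = \col_(k < d) bom P w (s k)].

End Defs.

(* Main.v *)
Require Import Defs.
From HB Require Import structures.
From mathcomp Require Import all_boot all_order all_algebra.
From mathcomp Require Import reals exp.
Import Order.TTheory GRing.Theory Num.Theory.
Local Open Scope ring_scope.

Section Aux.
Variables (R : realType) (d : nat) (P : cube d -> R) (w : cube d).

Definition inS (k : 'I_d) (nu : cube d) : bool :=
  (nu k != w k) && [forall j : 'I_d, (k < j)%N ==> (nu j == w j)].

Definition lhs (y : 'I_d -> R) (nu : cube d) : R := \sum_(i < d) Aom R w nu i * y i.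

Lemma minimizer (k : 'I_d) (F : cube d -> R) :
  exists nu, inS k nu /\ forall mu, inS k mu -> F nu <= F mu.
Proof.
pose nu0 : cube d := [ffun j => if j == k then ~~ w j else w j].
have h0 : inS k nu0.
  apply/andP; split; first by rewrite ffunE eqxx; case: (w k).
  apply/forallP => j; apply/implyP => hj; rewrite ffunE.
  have /negbTE -> : j != k by apply/eqP => ejk; rewrite ejk ltnn in hj.
  by [].
case: (@arg_minP _ R (cube d) nu0 (inS k) F h0) => nu Hnu Hmin.
by exists nu; split.
Qed.

Definition Inv (n : nat) (y : 'I_d -> R) (s : 'I_d -> cube d) : Prop :=
  (forall k : 'I_d, (k < n)%N -> inS k (s k) /\ lhs y (s k) = bom P w (s k)) /\
  (forall nu : cube d, nu != w -> (forall j : 'I_d, (n <= j)%N -> nu j == w j) ->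
      lhs y nu <= bom P w nu).

Lemma Aom0 (nu : cube d) (i : 'I_d) : nu i == w i -> Aom R w nu i = 0.
Proof. by rewrite /Aom => ->. Qed.

Lemma inv_all n : (n <= d)%N -> exists y s, Inv n y s.
Proof.
elim: n => [_|n IH hn].
  exists (fun _ => 0), (fun _ => w); split => // nu nuw H.
  exfalso; move/negP: nuw; apply; apply/eqP/ffunP => j; exact/eqP/H.
have [y [s [Ha Hb]]] := IH (ltnW hn).
pose k : 'I_d := Ordinal hn.
pose F nu := bom P w nu - \sum_(i < d | i != k) Aom R w nu i * y i.
have [nus [Hs Hmin]] := minimizer k F.
pose y' := fun i => if i == k then F nus else y i.
pose s' := fun i => if i == k then nus else s i.
have lhsE : forall nu, lhs y' nu = Aom R w nu k * F nus +
        \sum_(i < d | i != k) Aom R w nu i * y i.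
  move=> nu; rewrite /lhs (bigD1 k) //= /y' eqxx; congr (_ + _).
  by apply: eq_bigr => i /negbTE ->.
have lhsE2 : forall nu, lhs y nu = Aom R w nu k * y k +
        \sum_(i < d | i != k) Aom R w nu i * y i.
  by move=> nu; rewrite /lhs (bigD1 k).
have inSk : forall nu, inS k nu -> Aom R w nu k = 1.
  by move=> nu /andP[h _]; rewrite /Aom h.
exists y', s'; split.
- move=> k' hk'; rewrite /s'; case: eqP => [->|nek].
    split => //; rewrite lhsE inSk // mul1r /F; by rewrite subrK.
  have hk'n : (k' < n)%N.
    rewrite ltnS leq_eqVlt in hk'; case/orP: hk' => // /eqP e.
    by exfalso; apply: nek; apply: val_inj.
  have [hi he] := Ha k' hk'n; split => //.
  have z : Aom R w (s k') k = 0.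
    apply: Aom0; move/andP: hi => [_ /forallP /(_ k) /implyP]; exact.
  by rewrite lhsE z mul0r add0r -he lhsE2 z mul0r add0r.
- move=> nu nuw Hnu.
  case: (boolP (nu k == w k)) => hk.
    have z : Aom R w nu k = 0 by apply: Aom0.
    rewrite lhsE z mul0r add0r.
    have := Hb nu nuw; rewrite lhsE2 z mul0r add0r; apply => j hj.
    rewrite leq_eqVlt in hj; case/orP: hj => [/eqP e|hj]; last exact: Hnu.
    by have -> : j = k by apply: val_inj.
  have hS : inS k nu.
    rewrite /inS hk /=; apply/forallP => j; apply/implyP => hj; exact: Hnu.
  rewrite lhsE inSk // mul1r.
  have := Hmin nu hS; rewrite {2}/F => h.
  by rewrite -lerBrDr.
Qed.

End Aux.

Theorem lemma4 (R : realType) (d : nat) (hd : (0 < d)%N)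
  (P : cube d -> R) (Ppos : forall nu, 0 < P nu) (Psum : \sum_(nu : cube d) P nu = 1)
  (w : cube d) :
  exists y : 'cV[R]_d, is_vertex P w y.
Proof.
have [y [s [Ha Hb]]] := @inv_all R d P w d (leqnn d).
exists (\col_i y i); split.
  move=> nu nuw.
  have H : lhs R d w y nu <= bom P w nu.
    by apply: Hb => // j hj; exfalso; rewrite leqNgt ltn_ord in hj.
  apply: le_trans H; rewrite le_eqVlt; apply/orP; left; apply/eqP.
  by apply: eq_bigr => i _; rewrite mxE.
exists s; split.
- move=> k1 k2 e.
  wlog lt : k1 k2 e / (k1 < k2)%N.
    move=> W; case: (ltngtP k1 k2) => h; [exact: W|exact/esym/W|exact: val_inj].
  have [/andP[h2 _] _] := Ha k2 (ltn_ord _).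
  have [/andP[_ /forallP /(_ k2) /implyP h1] _] := Ha k1 (ltn_ord _).
  by move: h2; rewrite -e (eqP (h1 lt)) eqxx.
- move=> k; have [/andP[h _] _] := Ha k (ltn_ord _).
  by apply/eqP => e; rewrite e eqxx in h.
- rewrite unitmxE det_trig.
    rewrite big1 ?unitr1 // => i _; rewrite mxE.
    by have [/andP[h _] _] := Ha i (ltn_ord _); rewrite /Aom h.
  apply/is_trig_mxP => i j hij; rewrite mxE.
  have [/andP[_ /forallP /(_ j) /implyP h1] _] := Ha i (ltn_ord _).
  by rewrite /Aom h1.
- apply/matrixP => k z; rewrite !mxE.
  have [_ <-] := Ha k (ltn_ord _).
  rewrite /lhs; apply: eq_bigr => i _; rewrite mxE.
  by rewrite (mxE _ (fun i0 _ => y i0)).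
Qed.
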